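(* Consider $p\ge 1$ machines, machine $v$ having nonnegative real parameters $k^A_v,k^B_v,t^A_v,t^B_v$, and a real bound $L$. For $1\le v\le p$ and an integer $a\ge 0$, let $b_v(a)=\{b\in\mathbb{Z}_{\ge 0} : f_v(a,b)\le L\}$ and $$dp(v,a)=\bigcup_{\substack{x_1+\dots+x_v=a\\ x_1,\dots,x_v\in\mathbb{Z}_{\ge 0}}}\big(b_1(x_1)+\dots+b_v(x_v)\big),$$ where $+$ denotes the sumset $X+Y=\{x+y : x\in X, y\in Y\}$. Then for every $1\le v\le p$ and every integer $a\ge 0$, the set $dp(v,a)$ is an interval of integers, i.e. if $c_1<c_2<c_3$ are integers with $c_1,c_3\in dp(v,a)$ then $c_2\in dp(v,a)$.
   Context: Each machine $v$ processes jobs of two types, A and B, in batches. A schedule of machine $v$ for the task-combination $(a,b)$ is a finite sequence of batches, each a nonempty group of jobs of a single type, with consecutive batches of different types, processing exactly $a$ A-jobs and $b$ B-jobs. An A-batch of $x$ jobs takes $t^A_v+k^A_v x^2$ time units and a B-batch of $x$ jobs takes $t^B_v+k^B_v x^2$ time units on machine $v$; the time of a schedule is the sum of its batch times (empty schedule: time $0$). $f_v(a,b)$ is the minimum time over all schedules of machine $v$ for $(a,b)$. Thus $dp(v,a)$ is the set of $b$ such that machines $1,\dots,v$ together can process $a$ A-jobs and $b$ B-jobs with each machine finishing within $L$ time units. *)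

(* Defs.v *)
From HB Require Import structures.
From mathcomp Require Import all_boot all_order all_algebra.
From mathcomp Require Import boolp classical_sets reals.
Set Implicit Arguments. Unset Strict Implicit. Unset Printing Implicit Defensive.
Import Order.TTheory GRing.Theory Num.Theory.
Local Open Scope ring_scope.
Local Open Scope classical_set_scope.

Record machine (R : realType) := Machine {
  kA : R; kB : R; tA : R; tB : R }.

(* A batch is (type, size); type true = A, false = B. *)
Definition batch := (bool * nat)%type.

Definition is_schedule (a b : nat) (s : seq batch) : bool :=
  [&& all (fun x : batch => 0 < x.2)%N s,
      sorted (fun x y : batch => x.1 != y.1) s,
      sumn [seq x.2 | x <- s & x.1] == a
    & sumn [seq x.2 | x <- s & ~~ x.1] == b].

Definition batch_time (R : realType) (m : machine R) (x : batch) : R :=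
  if x.1 then tA m + kA m * (x.2%:R) ^+ 2 else tB m + kB m * (x.2%:R) ^+ 2.

Definition sched_time (R : realType) (m : machine R) (s : seq batch) : R :=
  \sum_(x <- s) batch_time m x.

(* f_v(a,b): minimum time over all schedules for (a,b)
   (the set is finite and nonempty, so the infimum is the minimum). *)
Definition f (R : realType) (m : machine R) (a b : nat) : R :=
  inf [set sched_time m s | s in [set s | is_schedule a b s]].

Definition bset (R : realType) (m : machine R) (L : R) (a : nat) : set nat :=
  [set b | f m a b <= L].

Definition dp (R : realType) (ms : nat -> machine R) (L : R) (v a : nat)
  : set nat :=
  [set c | exists x y : nat -> nat,
      [/\ (\sum_(1 <= i < v.+1) x i)%N = a,
          (\sum_(1 <= i < v.+1) y i)%N = c
        & forall i, (1 <= i <= v)%N -> bset (ms i) L (x i) (y i)]].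

(* Main.v *)
Require Import Defs.
From HB Require Import structures.
From mathcomp Require Import all_boot all_order all_algebra.
From mathcomp Require Import boolp classical_sets reals.
From mathcomp Require Import zify ring lra.
Set Implicit Arguments. Unset Strict Implicit. Unset Printing Implicit Defensive.
Import Order.TTheory GRing.Theory Num.Theory.

Definition btw (a t b : nat) := (a <= t <= b)%N \/ (b <= t <= a)%N.

Definition IntP (G : nat -> nat -> Prop) :=
  forall x n1 n2 n3, G x n1 -> G x n3 -> btw n1 n2 n3 -> G x n2.
Definition SP (G : nat -> nat -> Prop) :=
  forall x n, G x.+1 n -> exists n', [/\ G x n', n' <= n & n <= n'.+1].
Definition Comb (G H : nat -> nat -> Prop) (x n : nat) :=
  exists x1 x2 n1 n2, [/\ x = x1 + x2, n = n1 + n2, G x1 n1 & H x2 n2].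

Lemma SP_down G : SP G -> forall x n x', G x n -> x' <= x -> exists n', G x' n'.
Proof.
move=> hS x n x' hG hle; elim: x n hG hle => [|x IH] n hG hle.
  by move: hle; rewrite leqn0 => /eqP->; exists n.
case: (ltngtP x' x.+1) hle => // [hlt _|-> _]; last by exists n.
by case: (hS _ _ hG) => n' [h1 _ _]; apply: (IH n').
Qed.

Lemma adjacent G H : IntP G -> SP G -> IntP H -> SP H ->
  forall p q a1 a2 b1 b2 t, G p.+1 a1 -> H q a2 -> G p b1 -> H q.+1 b2 ->
  btw (a1 + a2) t (b1 + b2) -> Comb G H (p + q).+1 t.
Proof.
move=> IG SG IH SH p q a1 a2 b1 b2 t g1 h2 g3 h4 hb.
case: (SG _ _ g1) => a1' [g1' l1 l1'].
case: (SH _ _ h4) => b2' [h4' l2 l2'].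
have [c1|c1] : btw (a1 + a2) t (a1 + b2') \/ btw (b1 + b2) t (a1' + b2).
  by rewrite /btw in hb *; lia.
  exists p.+1, q, a1, (t - a1); split => //; [rewrite /btw in c1; lia |].
  by apply: (IH q a2 _ b2') => //; rewrite /btw in c1 *; lia.
exists p, q.+1, (t - b2), b2; split => //; [lia | rewrite /btw in c1; lia |].
by apply: (IG p b1 _ a1') => //; rewrite /btw in c1 *; lia.
Qed.

Lemma Comb_IntP G H : IntP G -> SP G -> IntP H -> SP H -> IntP (Comb G H).
Proof.
move=> IG SG IH SH x n1 t n3 [x1 [x2 [m1 [m2 [ex en g1 h1]]]]].
move=> [y1 [y2 [k1 [k2 [ey en' g2 h2]]]]]; subst n1 n3.
move e: (x1 - y1 + (y1 - x1)) => d.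
elim: d y1 y2 k1 k2 ey g2 h2 e t => [|d IHd] y1 y2 k1 k2 ey g2 h2 e t hb.
  have ey1 : y1 = x1 by lia.
  have ey2 : y2 = x2 by lia.
  subst y1 y2.
  have [c|c] : btw (m1 + m2) t (k1 + m2) \/ btw (k1 + m2) t (k1 + k2).
    by rewrite /btw in hb *; lia.
    exists x1, x2, (t - m2), m2; split => //; first by rewrite /btw in c; lia.
    by apply: (IG x1 m1 _ k1) => //; rewrite /btw in c *; lia.
  exists x1, x2, k1, (t - k1); split => //; first by rewrite /btw in c; lia.
  by apply: (IH x2 m2 _ k2) => //; rewrite /btw in c *; lia.
case: (ltngtP x1 y1) => hc; last by lia.
- (* x1 < y1: move one job of G to H in y-config *)
  have ey1 : y1 = y1.-1.+1 by lia.
  rewrite ey1 in g2.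
  case: (SG _ _ g2) => k1' [g2' _ _].
  have [k2' h2'] : exists n', H y2.+1 n' by apply: (SP_down SH h1); lia.
  have [c|c] : btw (m1 + m2) t (k1' + k2') \/ btw (k1' + k2') t (k1 + k2).
    by rewrite /btw in hb *; lia.
    by apply: (IHd y1.-1 y2.+1 k1' k2') => //; lia.
  have -> : x = (y1.-1 + y2).+1 by lia.
  apply: (adjacent IG SG IH SH g2 h2 g2' h2').
  by rewrite /btw in c *; lia.
-
  have ey2 : y2 = y2.-1.+1 by lia.
  rewrite ey2 in h2.
  case: (SH _ _ h2) => k2' [h2' _ _].
  have [k1' g2'] : exists n', G y1.+1 n' by apply: (SP_down SG g1); lia.
  have [c|c] : btw (m1 + m2) t (k1' + k2') \/ btw (k1' + k2') t (k1 + k2).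
    by rewrite /btw in hb *; lia.
    by apply: (IHd y1.+1 y2.-1 k1' k2') => //; lia.
  have -> : x = (y1 + y2.-1).+1 by lia.
  apply: (adjacent IG SG IH SH g2' h2' g2 h2).
  by rewrite /btw in c *; lia.
Qed.

Lemma Comb_SP G H : SP G -> SP H -> SP (Comb G H).
Proof.
move=> SG SH x n [x1 [x2 [n1 [n2 [ex en g h]]]]].
case: x1 ex g => [|x1] ex g.
  have ex2 : x2 = x.+1 by lia.
  rewrite ex2 in h; case: (SH _ _ h) => n' [h' l1 l2].
  exists (n1 + n'); split; [exists 0, x, n1, n'; split=> // | lia | lia].
case: (SG _ _ g) => n' [g' l1 l2].
exists (n' + n2); split; [exists x1, x2, n', n2; split=> //; lia | lia | lia].
Qed.


Definition Sum (P : nat -> nat -> nat -> Prop) (v a c : nat) :=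
  exists x y : nat -> nat,
    [/\ (\sum_(1 <= i < v.+1) x i)%N = a, (\sum_(1 <= i < v.+1) y i)%N = c
      & forall i, (1 <= i <= v)%N -> P i (x i) (y i)].

Lemma Sum0 P a c : Sum P 0 a c <-> a = 0 /\ c = 0.
Proof.
split.
  by move=> [x [y [<- <- _]]]; rewrite !big_geq.
move=> [-> ->]; exists (fun _ => 0), (fun _ => 0); split => //; first by rewrite big_geq.
  by rewrite big_geq.
by move=> i; lia.
Qed.

Lemma SumS P v a c : Sum P v.+1 a c <->
  exists a1 a2 c1 c2, [/\ a = a1 + a2, c = c1 + c2, Sum P v a1 c1 & P v.+1 a2 c2].
Proof.
split.
  move=> [x [y [<- <- h]]].
  exists (\sum_(1 <= i < v.+1) x i), (x v.+1), (\sum_(1 <= i < v.+1) y i), (y v.+1).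
  split; first by rewrite big_nat_recr.
  - by rewrite big_nat_recr.
  - exists x, y; split => // i hi; apply: h; lia.
  - by apply: h; lia.
move=> [a1 [a2 [c1 [c2 [-> -> [x [y [ex ey h]]] hv]]]]].
exists (fun i => if i == v.+1 then a2 else x i), (fun i => if i == v.+1 then c2 else y i).
split.
- rewrite big_nat_recr //= eqxx -ex; congr (_ + _).
  by apply: eq_big_nat => i hi; have -> : (i == v.+1) = false by lia.
- rewrite big_nat_recr //= eqxx -ey; congr (_ + _).
  by apply: eq_big_nat => i hi; have -> : (i == v.+1) = false by lia.
- move=> i hi; case: eqP => [->|ne] //; apply: h; lia.
Qed.

Lemma Sum_Comb P v a c : Sum P v.+1 a c <-> Comb (Sum P v) (P v.+1) a c.
Proof.
rewrite SumS; split.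
  by move=> [a1 [a2 [c1 [c2 [h1 h2 h3 h4]]]]]; exists a1, a2, c1, c2.
by move=> [a1 [a2 [c1 [c2 [h1 h2 h3 h4]]]]]; exists a1, a2, c1, c2.
Qed.

Lemma Sum_props P v : (forall i, (1 <= i <= v)%N -> IntP (P i) /\ SP (P i)) ->
  IntP (Sum P v) /\ SP (Sum P v).
Proof.
elim: v => [|v IHv] h.
  split.
    by move=> x n1 n2 n3 /Sum0 [-> ->] /Sum0 [_ ->]; rewrite /btw => hb; apply/Sum0; split => //; lia.
  by move=> x n /Sum0 [].
have [I1 S1] : IntP (Sum P v) /\ SP (Sum P v) by apply: IHv => i hi; apply: h; lia.
have [I2 S2] : IntP (P v.+1) /\ SP (P v.+1) by apply: h; lia.
split.
  move=> x n1 n2 n3 /Sum_Comb h1 /Sum_Comb h3 hb; apply/Sum_Comb.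
  exact: (Comb_IntP I1 S1 I2 S2 h1 h3 hb).
move=> x n /Sum_Comb hc; case: (Comb_SP S1 S2 hc) => n' [h1 h2 h3].
by exists n'; split => //; apply/Sum_Comb.
Qed.

Lemma Sum_mono (P Q : nat -> nat -> nat -> Prop) v a c :
  (forall i x y, (1 <= i <= v)%N -> P i x y -> Q i x y) -> Sum P v a c -> Sum Q v a c.
Proof. by move=> h [x [y [h1 h2 h3]]]; exists x, y; split => // i hi; apply: h => //; apply: h3. Qed.

Lemma Sum_step (B G : nat -> nat -> nat -> Prop) v :
  (forall i x y, (1 <= i <= v)%N -> B i x y ->
     ((1 <= y)%N /\ B i x y.-1) \/ G i x y) ->
  forall a c, Sum B v a c -> ((1 <= c)%N /\ Sum B v a c.-1) \/ Sum G v a c.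
Proof.
elim: v => [|v IHv] h a c.
  by move=> /Sum0 [-> ->]; right; apply/Sum0.
move=> /SumS [a1 [a2 [c1 [c2 [-> -> hs hb]]]]].
have IH := IHv (fun i x y hi => h i x y ltac:(lia)) a1 c1 hs.
have hv := h v.+1 a2 c2 ltac:(lia) hb.
case: IH => [[c1p hs']|hg].
  left; split; first by lia.
  apply/SumS; exists a1, a2, c1.-1, c2; split => //; lia.
case: hv => [[c2p hb']|hg2].
  left; split; first by lia.
  apply/SumS; exists a1, a2, c1, c2.-1; split => //; lia.
right; apply/SumS; exists a1, a2, c1, c2; split => //.
Qed.

Lemma Sum_down (B G : nat -> nat -> nat -> Prop) v :
  (forall i x y, (1 <= i <= v)%N -> B i x y -> exists2 n, (n <= y)%N & G i x n) ->
  forall a c, Sum B v a c -> exists2 n, (n <= c)%N & Sum G v a n.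
Proof.
elim: v => [|v IHv] h a c.
  by move=> /Sum0 [-> ->]; exists 0 => //; apply/Sum0.
move=> /SumS [a1 [a2 [c1 [c2 [-> -> hs hb]]]]].
case: (IHv (fun i x y hi => h i x y ltac:(lia)) a1 c1 hs) => n1 l1 g1.
case: (h v.+1 a2 c2 ltac:(lia) hb) => n2 l2 g2.
exists (n1 + n2); first by lia.
by apply/SumS; exists a1, a2, n1, n2.
Qed.

Local Open Scope ring_scope.

Definition sq (l : seq nat) := sumn [seq (p * p)%N | p <- l].
Notation posl l := (all (fun p => 0 < p)%N l).

Lemma pos_size l : posl l -> (size l <= sumn l)%N.
Proof. by elim: l => //= p l IH /andP [hp hl]; have := IH hl; lia. Qed.

Lemma sq_ge_sum l : (sumn l <= sq l)%N.
Proof. by elim: l => //= p l IH; rewrite /sq /= -/(sq l); nia. Qed.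

Lemma dec_lemma l : posl l -> has (fun p => 1 < p)%N l ->
  exists l', [/\ posl l', size l' = size l, sumn l' = (sumn l).-1 & (sq l' <= sq l)%N].
Proof.
elim: l => //= p l IH /andP [hp hl] /orP [h1|h2].
  exists (p.-1 :: l); rewrite /sq /= -/(sq l); split => //.
  - by rewrite hl andbT; lia.
  - lia.
  - nia.
case: (IH hl h2) => l' [h1 h2' h3 h4].
exists (p :: l'); rewrite /sq /= -/(sq l) -/(sq l'); split => //.
- by rewrite hp.
- by rewrite h2'.
- have := pos_size hl; have : (0 < size l)%N by case: (l) h2.
  lia.
- lia.
Qed.

Lemma ones_lemma l : posl l -> ~~ has (fun p => 1 < p)%N l ->
  sumn l = size l /\ sq l = size l.
Proof.
elim: l => //= p l IH /andP [hp hl]; rewrite negb_or => /andP [h1 h2].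
have [e1 e2] := IH hl h2; rewrite /sq /= -/(sq l) e1 e2.
have -> : p = 1%N by lia.
by [].
Qed.

Section Machine.
Variable R : realType.
Variable m : machine R.
Variable L : R.
Hypothesis hkA : 0 <= kA m.
Hypothesis hkB : 0 <= kB m.
Hypothesis htA : 0 <= tA m.
Hypothesis htB : 0 <= tB m.

Definition pcost (PA PB : seq nat) : R :=
  (size PA)%:R * tA m + kA m * (sq PA)%:R + (size PB)%:R * tB m + kB m * (sq PB)%:R.

Definition Bpair (x y : nat) := exists PA PB,
  [/\ posl PA, posl PB, sumn PA = x, sumn PB = y &
      [/\ (size PA <= (size PB).+1)%N, (size PB <= (size PA).+1)%N & pcost PA PB <= L]].

Definition fcost (k : nat) (PA : seq nat) : R :=
  k%:R * tA m + kA m * (sq PA)%:R + (k.-1)%:R * (tB m + kB m).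

Definition Fe (x k : nat) := exists PA,
  [/\ posl PA, sumn PA = x, size PA = k & fcost k PA <= L].

Definition Gm (x n : nat) := exists k, Fe x k /\ n = k.-1.

Lemma Fa x y : Bpair x y -> exists2 n, (n <= y)%N & Gm x n.
Proof.
move=> [PA [PB [pA pB sA sB [z1 z2 hc]]]].
exists (size PA).-1.
  by have := pos_size pB; lia.
exists (size PA); split => //; exists PA; split => //.
apply: le_trans hc; rewrite /fcost /pcost.
have h1 : ((size PA).-1%:R : R) <= (size PB)%:R by rewrite ler_nat; lia.
have h2 : ((size PA).-1%:R : R) <= (sq PB)%:R.
  by rewrite ler_nat; have := pos_size pB; have := sq_ge_sum PB; lia.
have h3 := ler_wpM2r htB h1.
have h4 := ler_wpM2l hkB h2.
rewrite mulrDr; lra.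
Qed.

Lemma Fb x n : Gm x n -> Bpair x n.
Proof.
move=> [k [[PA [pA sA zA hc]] ->]].
exists PA, (nseq k.-1 1%N); split => //.
- by rewrite all_nseq orbT.
- by elim: k.-1 => //= j ->.
split.
- by rewrite size_nseq; lia.
- by rewrite size_nseq; lia.
apply: le_trans hc; rewrite /fcost /pcost size_nseq zA.
have -> : sq (nseq k.-1 1%N) = k.-1 by rewrite /sq; elim: k.-1 => //= j ->.
by rewrite mulrDr [kB m * _]mulrC addrA.
Qed.

Lemma Fc x y : Bpair x y -> ((1 <= y)%N /\ Bpair x y.-1) \/ Gm x y.
Proof.
move=> [PA [PB [pA pB sA sB [z1 z2 hc]]]].
case: (boolP (has (fun p => 1 < p)%N PB)) => hh.
  case: (dec_lemma pB hh) => PB' [p' s' e' q'].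
  left; split.
    have := pos_size pB; have : (0 < size PB)%N by case: (PB) hh.
    lia.
  exists PA, PB'; split => //; first by rewrite e' sB.
  split; [lia | lia |].
  apply: le_trans hc; rewrite /pcost s'.
  have : ((sq PB')%:R : R) <= (sq PB)%:R by rewrite ler_nat.
  move=> /(ler_wpM2l hkB); lra.
have [e1 e2] := ones_lemma pB hh.
case: (leqP (size PA) (size PB)) => hs.
  case: PB pB sB z1 z2 hc hh e1 e2 hs => [|p PB] pB sB z1 z2 hc hh e1 e2 hs.
    right; exists 0%N; split; last by move: sB => /= <-.
    have e : size PA = 0%N by move: hs; rewrite leqn0 => /eqP.
    move/size0nil: e => ePA; subst PA.
    exists [::]; split => //.
    apply: le_trans hc; rewrite /fcost /pcost /sq /=.
    by rewrite !mul0r !mulr0 !addr0.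
  left; split; first by rewrite -sB e1.
  move: pB => /= /andP [_ pB]; move: hh => /= /norP [_ hh].
  exists PA, PB; split => //.
    have [e1' _] := ones_lemma pB hh; by rewrite -sB e1 /= e1'.
  split; [by move: z2 hs => /=; lia | by move: z2 hs => /=; lia |].
  apply: le_trans hc; rewrite /pcost /sq /= -/(sq PB).
  have [_ e2'] := ones_lemma pB hh.
  rewrite e2' -natr1.
  have hp : ((size PB)%:R : R) <= (p * p + size PB)%:R by rewrite ler_nat; lia.
  have h := ler_wpM2l hkB hp; rewrite !mulrDl !mul1r; move: htB h; clear; move=> h1 h2; lra.
right; exists (size PA); split; last by rewrite -sB e1; lia.
exists PA; split => //.
apply: le_trans hc; rewrite /fcost /pcost e2.
have -> : (size PA).-1 = size PB by lia.
by rewrite mulrDr [kB m * _]mulrC addrA.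
Qed.


Lemma Gm_SP : SP Gm.
Proof.
move=> x n [k [[PA [pA sA zA hc]] ->]].
case: (boolP (has (fun p => 1 < p)%N PA)) => hh.
  case: (dec_lemma pA hh) => PA' [p' s' e' q'].
  exists k.-1; split => //; exists k; split => //; exists PA'; split => //.
  - by rewrite e' sA.
  - by rewrite s'.
  apply: le_trans hc; rewrite /fcost.
  have : ((sq PA')%:R : R) <= (sq PA)%:R by rewrite ler_nat.
  move=> /(ler_wpM2l hkA) h; move: h; clear; move=> h; lra.
have [e1 e2] := ones_lemma pA hh.
case: PA pA sA zA hc hh e1 e2 => [|p PA] //= pA sA zA hc hh e1 e2.
move: pA hh => /andP [_ pA] /norP [_ hh].
have [e1' e2'] := ones_lemma pA hh.
exists (size PA).-1; split; [| lia | lia].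
exists (size PA); split => //; exists PA; split => //; first by lia.
apply: le_trans hc; rewrite /fcost /sq /= -/(sq PA) e2' -zA.
have hp : ((size PA)%:R : R) <= (p * p + size PA)%:R by rewrite ler_nat; lia.
have h := ler_wpM2l hkA hp.
have h2 : ((size PA).-1%:R : R) <= (size PA)%:R by rewrite ler_nat; lia.
have h3 := ler_wpM2r (addr_ge0 htB hkB) h2.
rewrite -natr1 /=; move: h h3 htA; clear; move=> h h3 h4; lra.
Qed.

Lemma sq_lb q l : (sq l + q * q.+1 * size l >= q.*2.+1 * sumn l)%N.
Proof.
elim: l => [|p l IH]; first by rewrite muln0.
rewrite /sq /= -/(sq l).
have : (p * p + q * q.+1 >= q.*2.+1 * p)%N.
  case: (leqP p q) => h.
    have -> : q = (p + (q - p))%N by lia.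
    set d := (q - p)%N; nia.
  have -> : p = (q.+1 + (p - q.+1))%N by lia.
  set d := (p - q.+1)%N; nia.
nia.
Qed.

Lemma balanced x k : (0 < k)%N -> (k <= x)%N ->
  exists B, [/\ posl B, sumn B = x, size B = k &
     (sq B + (x %/ k) * (x %/ k).+1 * k = (x %/ k).*2.+1 * x)%N].
Proof.
move=> k0 kx.
set q := (x %/ k)%N; set r := (x %% k)%N.
have q0 : (0 < q)%N by rewrite /q divn_gt0.
have rk : (r < k)%N by rewrite /r ltn_pmod.
have ex : x = (q * k + r)%N by rewrite /q /r -divn_eq.
exists (nseq r q.+1 ++ nseq (k - r) q); split.
- by rewrite all_cat !all_nseq q0 /= !orbT.
- by rewrite sumn_cat !sumn_nseq ex; nia.
- by rewrite size_cat !size_nseq; lia.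
rewrite /sq map_cat !map_nseq sumn_cat !sumn_nseq ex.
have ek : k = (r + (k - r))%N by lia.
move: (k - r)%N ek => s ek; clearbody q r; subst k.
nia.
Qed.

Lemma pos_size0 l : posl l -> sumn l = 0%N -> size l = 0%N.
Proof. by move=> h e; have := pos_size h; lia. Qed.

Lemma Fe_interp x k1 k2 k3 : Fe x k1 -> Fe x k3 -> (k1 < k2 < k3)%N -> Fe x k2.
Proof.
move=> [P1 [p1 s1 z1 c1]] [P3 [p3 s3 z3 c3]] hk.
have k3x : (k3 <= x)%N by rewrite -z3 -s3 pos_size.
have k1p : (0 < k1)%N.
  case: (posnP k1) => // e; move: z1; rewrite e => /size0nil e'.
  by move: s1; rewrite e' /= => ex; lia.
have [B [pB sB zB eB]] := @balanced x k2 ltac:(lia) ltac:(lia).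
exists B; split => //.
set q := (x %/ k2)%N in eB.
have l1 := sq_lb q P1; have l3 := sq_lb q P3.
rewrite s1 z1 in l1; rewrite s3 z3 in l3.
move: c1 c3; rewrite /fcost.
move=> c1 c3; move: c1 c3.
set Q := (q * q.+1)%N in eB l1 l3; set T := (q.*2.+1 * x)%N in eB l1 l3.
have eBR : ((sq B)%:R : R) = T%:R - Q%:R * k2%:R.
  by rewrite -eB natrD natrM addrK.
have l1R : (T%:R : R) - Q%:R * k1%:R <= (sq P1)%:R.
  by rewrite lerBlDr -natrM -natrD ler_nat.
have l3R : (T%:R : R) - Q%:R * k3%:R <= (sq P3)%:R.
  by rewrite lerBlDr -natrM -natrD ler_nat.
have m1 := ler_wpM2l hkA l1R; have m3 := ler_wpM2l hkA l3R.
have k2p : (0 < k2)%N by move: hk k1p; clear; move=> *; lia.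
have k3p : (0 < k3)%N by move: hk k1p; clear; move=> *; lia.
have pr k : (0 < k)%N -> ((k.-1)%:R : R) = k%:R - 1.
  by move=> kp; rewrite -subn1 natrB.
rewrite eBR (pr _ k1p) (pr _ k2p) (pr _ k3p).
set K1 := (k1%:R : R); set K2 := (k2%:R : R); set K3 := (k3%:R : R).
have d1 : 0 < K3 - K2 by rewrite subr_gt0 ltr_nat; move: hk; clear; move=> *; lia.
have d2 : 0 < K2 - K1 by rewrite subr_gt0 ltr_nat; move: hk; clear; move=> *; lia.
move=> c1 c3.
pose phi := fun K : R => K * tA m + kA m * (T%:R - Q%:R * K) + (K - 1) * (tB m + kB m).
have a1 : phi K1 <= L by rewrite /phi; move: m1 c1; clear; move=> *; lra.
have a3 : phi K3 <= L by rewrite /phi; move: m3 c3; clear; move=> *; lra.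
have id : phi K2 * (K3 - K1) = phi K1 * (K3 - K2) + phi K3 * (K2 - K1).
  by rewrite /phi; ring.
have : phi K2 * (K3 - K1) <= L * (K3 - K1).
  rewrite id.
  have := ler_wpM2r (ltW d1) a1; have := ler_wpM2r (ltW d2) a3.
  by move: d1 d2; clear; move=> *; lra.
rewrite ler_pM2r; last by move: d1 d2; clear; move=> *; lra.
by rewrite /phi.
Qed.

Lemma Gm_IntP : IntP Gm.
Proof.
suff H : forall x n1 n2 n3, Gm x n1 -> Gm x n3 -> (n1 <= n2 <= n3)%N -> Gm x n2.
  move=> x n1 n2 n3 g1 g3 [h|h]; [exact: (H x n1 n2 n3) | exact: (H x n3 n2 n1)].
move=> x n1 n2 n3 g1 g3 hb.
case: (eqVneq n2 n1) => [->|ne1] //.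
case: (eqVneq n2 n3) => [->|ne3] //.
move: g1 g3 => [k1 [f1 e1]] [k3 [f3 e3]].
have k3p : (1 < k3)%N by lia.
have k1p : (0 < k1)%N.
  case: (posnP k1) => // e; move: f1 f3 => [P1 [p1 s1 z1 _]] [P3 [p3 s3 z3 _]].
  move: z1; rewrite e => /size0nil e'; move: s1; rewrite e' /= => ex.
  by have := pos_size p3; lia.
exists n2.+1; split => //.
by apply: (Fe_interp f1 f3); lia.
Qed.

Definition alt := (fun x y : batch => x.1 != y.1).
Definition PAof (s : seq batch) := [seq x.2 | x <- s & x.1].
Definition PBof (s : seq batch) := [seq x.2 | x <- s & ~~ x.1].

Lemma sched_split s : sched_time m s = pcost (PAof s) (PBof s).
Proof.
rewrite /sched_time /pcost /PAof /PBof /sq.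
elim: s => [|z s IH]; first by rewrite big_nil /= !mul0r !mulr0 !addr0.
rewrite big_cons IH /batch_time; case: z => [[] n] /=.
  rewrite -!natr1 !natrD natrM !mulrDl !mulrDr mul1r expr2; ring.
rewrite -!natr1 !natrD natrM !mulrDl !mulrDr mul1r expr2; ring.
Qed.

Lemma sched_ge0 s : 0 <= sched_time m s.
Proof.
rewrite /sched_time; apply: sumr_ge0 => z _; rewrite /batch_time.
by case: ifP => _; apply: addr_ge0 => //; apply: mulr_ge0 => //; apply: exprn_ge0.
Qed.

Lemma alt_count x s : path alt x s ->
  if x.1 then (size (PBof (x :: s)) <= size (PAof (x :: s)) <= (size (PBof (x :: s))).+1)%N
  else (size (PAof (x :: s)) <= size (PBof (x :: s)) <= (size (PAof (x :: s))).+1)%N.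
Proof.
elim: s x => [|[yb yn] s IH] [xb xn] /=; first by case: xb.
move=> /andP [hxy hp]; have := IH (yb, yn) hp.
move: hxy; rewrite /alt /PAof /PBof /=.
by case: xb; move: hp; case: yb => //= _; rewrite ?size_map /=; lia.
Qed.

Lemma alt_sizes s : sorted alt s ->
  (size (PAof s) <= (size (PBof s)).+1)%N /\ (size (PBof s) <= (size (PAof s)).+1)%N.
Proof.
case: s => [|x s] //= hp; have := alt_count hp.
by case: (x.1); lia.
Qed.

Fixpoint weave (b : bool) (l1 l2 : seq nat) : seq batch :=
  match l1, l2 with
  | x :: l1', y :: l2' => (b, x) :: (~~ b, y) :: weave b l1' l2'
  | x :: _, [::] => [:: (b, x)]
  | [::], _ => [::]
  end.

Lemma weave_filter b l1 l2 : (size l2 <= size l1 <= (size l2).+1)%N ->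
  [seq z.2 | z <- weave b l1 l2 & z.1 == b] = l1 /\
  [seq z.2 | z <- weave b l1 l2 & z.1 != b] = l2.
Proof.
elim: l1 l2 => [|x l1 IH] [|y l2] //=.
- by case: l1 {IH} => //= _; rewrite eqxx.
- move=> h; have [e1 e2] := IH l2 h.
  by case: b e1 e2 {IH} => /= -> ->.
Qed.

Lemma weave_path b l1 l2 n : path alt (~~ b, n) (weave b l1 l2).
Proof.
elim: l1 l2 n => [|x l1 IH] [|y l2] n //=.
- by rewrite /alt /=; case: b {IH}.
- by rewrite IH /alt /=; case: b {IH}.
Qed.

Lemma weave_pos b l1 l2 : posl l1 -> posl l2 -> all (fun z : batch => 0 < z.2)%N (weave b l1 l2).
Proof.
elim: l1 l2 => [|x l1 IH] l2 //= /andP [hx h1]; case: l2 => [|y l2] /=; first by rewrite hx.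
by move=> /andP [hy h2]; rewrite hx hy IH.
Qed.

Lemma pair_sched x y PA PB : posl PA -> posl PB -> sumn PA = x -> sumn PB = y ->
  (size PA <= (size PB).+1)%N -> (size PB <= (size PA).+1)%N ->
  exists s, is_schedule x y s /\ sched_time m s = pcost PA PB.
Proof.
move=> pA pB sA sB z1 z2.
have key : forall b l1 l2, (size l2 <= size l1 <= (size l2).+1)%N -> posl l1 -> posl l2 ->
   [/\ all (fun z : batch => 0 < z.2)%N (weave b l1 l2), sorted alt (weave b l1 l2),
       [seq z.2 | z <- weave b l1 l2 & z.1 == b] = l1 &
       [seq z.2 | z <- weave b l1 l2 & z.1 != b] = l2].
  move=> b l1 l2 hs p1 p2; have [e1 e2] := weave_filter b hs.
  split => //; first exact: weave_pos.
  by apply: (path_sorted (x := (~~ b, 0%N))); apply: weave_path.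
case: (leqP (size PB) (size PA)) => hs.
  have [h1 h2 h3 h4] := key true PA PB ltac:(apply/andP; split => //) pA pB.
  have e3 : PAof (weave true PA PB) = PA.
    by rewrite -[RHS]h3 /PAof; congr map; apply: eq_filter => z; rewrite eqb_id.
  have e4 : PBof (weave true PA PB) = PB.
    by rewrite -[RHS]h4 /PBof; congr map; apply: eq_filter => z; case: (z.1).
  exists (weave true PA PB); split; last by rewrite sched_split e3 e4.
  by rewrite /is_schedule h1 h2 -/(PAof _) -/(PBof _) e3 e4 sA sB !eqxx.
have [h1 h2 h3 h4] := key false PB PA ltac:(apply/andP; split => //; lia) pB pA.
have e3 : PAof (weave false PB PA) = PA.
  by rewrite -[RHS]h4 /PAof; congr map; apply: eq_filter => z; case: (z.1).
have e4 : PBof (weave false PB PA) = PB.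
  by rewrite -[RHS]h3 /PBof; congr map; apply: eq_filter => z; case: (z.1).
exists (weave false PB PA); split; last by rewrite sched_split e3 e4.
by rewrite /is_schedule h1 h2 -/(PAof _) -/(PBof _) e3 e4 sA sB !eqxx.
Qed.

Lemma sched_pair x y s : is_schedule x y s ->
  [/\ posl (PAof s), posl (PBof s), sumn (PAof s) = x, sumn (PBof s) = y &
      [/\ (size (PAof s) <= (size (PBof s)).+1)%N, (size (PBof s) <= (size (PAof s)).+1)%N
        & sched_time m s = pcost (PAof s) (PBof s)]].
Proof.
move=> /and4P [hp hs /eqP ha /eqP hb]; have [z1 z2] := alt_sizes hs.
split => //; last by split => //; exact: sched_split.
- rewrite /PAof all_map; apply/allP => z; rewrite mem_filter => /andP [_ hz].
  by move/allP: hp => /(_ z hz).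
- rewrite /PBof all_map; apply/allP => z; rewrite mem_filter => /andP [_ hz].
  by move/allP: hp => /(_ z hz).
Qed.

Definition allb N : seq batch := [seq (b, i) | b <- [:: true; false], i <- iota 0 N.+1].
Fixpoint enum_s N k : seq (seq batch) :=
  if k is k'.+1 then [::] :: [seq z :: s | z <- allb N, s <- enum_s N k'] else [:: [::]].

Lemma mem_enum N k s : (size s <= k)%N -> all (fun z : batch => z.2 <= N)%N s ->
  s \in enum_s N k.
Proof.
elim: k s => [|k IH] [|z s] // hs /andP [hz ha].
have -> : enum_s N k.+1 = [::] :: [seq z :: s | z <- allb N, s <- enum_s N k] by [].
rewrite in_cons; apply/orP; right.
apply: (@allpairs_f _ _ _ (fun (z : batch) (s : seq batch) => z :: s)); last by apply: IH => //; move: hs => /=; lia.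
clear hs; case: z hz => b i hz.
apply: (@allpairs_f _ _ _ (fun (b : bool) (i : nat) => (b, i))).
  by case: b hz.
by rewrite mem_iota; move: hz => /=; lia.
Qed.

Lemma sumn_split s : (sumn [seq z.2 | z <- s & z.1] + sumn [seq z.2 | z <- s & ~~ z.1])%N
  = sumn [seq z.2 | z <- s].
Proof. by elim: s => //= z s IH; case: (z.1) => /=; rewrite -IH; lia. Qed.

Lemma mem_le_sumn (l : seq nat) n : n \in l -> (n <= sumn l)%N.
Proof. by elim: l => //= p l IH; rewrite in_cons => /orP [/eqP ->|/IH]; lia. Qed.

Lemma sched_bound x y s : is_schedule x y s -> s \in enum_s (x + y) (x + y).
Proof.
move=> /and4P [hp hs /eqP ha /eqP hb].
have e := sumn_split s; rewrite ha hb in e.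
apply: mem_enum.
  have : posl [seq z.2 | z <- s] by rewrite all_map.
  by move/pos_size; rewrite size_map e.
apply/allP => z hz; rewrite e; apply: mem_le_sumn; exact: map_f.
Qed.

Lemma min_exists (T : eqType) (c : T -> R) (P : pred T) (l : seq T) :
  has P l -> exists s0, [/\ s0 \in l, P s0 & forall s, s \in l -> P s -> c s0 <= c s].
Proof.
elim: l => //= z l IH.
case: (boolP (has P l)) => hl.
  case: (IH hl) => s1 [i1 p1 h1] _.
  case: (boolP (P z)) => pz.
    case: (lerP (c z) (c s1)) => hc.
      exists z; split => //; first by rewrite mem_head.
      move=> s; rewrite in_cons => /orP [/eqP ->|hs] ps //.
      by apply: le_trans hc (h1 s hs ps).
    exists s1; split => //; first by rewrite in_cons i1 orbT.
    move=> s; rewrite in_cons => /orP [/eqP ->|hs] ps; first exact: ltW.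
    exact: h1.
  exists s1; split => //; first by rewrite in_cons i1 orbT.
  move=> s; rewrite in_cons => /orP [/eqP ->|hs] ps; first by rewrite ps in pz.
  exact: h1.
rewrite orbF => pz; exists z; split => //; first by rewrite mem_head.
move=> s; rewrite in_cons => /orP [/eqP ->|hs] ps //.
by move/hasPn: hl => /(_ s hs); rewrite ps.
Qed.

Lemma exists_sched x y : exists s, is_schedule x y s.
Proof.
have [PA [PB [pA pB sA sB [z1 z2]]]] : exists PA PB, [/\ posl PA, posl PB, sumn PA = x,
    sumn PB = y & (size PA <= 1)%N /\ (size PB <= 1)%N].
  exists (if x is 0 then [::] else [:: x]), (if y is 0 then [::] else [:: y]).
  by case: x => [|x]; case: y => [|y]; split; rewrite /= ?addn0.
have [s [hs _]] := pair_sched pA pB sA sB ltac:(lia) ltac:(lia).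
by exists s.
Qed.

Local Open Scope classical_set_scope.
Lemma f_le_iff x y : f m x y <= L <-> Bpair x y.
Proof.
set S := [set sched_time m s | s in [set s | is_schedule x y s]].
have hlb : has_lbound S.
  by exists 0 => z [s _ <-]; apply: sched_ge0.
split.
  move=> hf.
  have [s1 hs1] := exists_sched x y.
  have hh : has (is_schedule x y) (enum_s (x + y) (x + y)).
    by apply/hasP; exists s1 => //; apply: sched_bound.
  case: (min_exists (sched_time m) hh) => s0 [i0 p0 h0].
  have le0 : sched_time m s0 <= f m x y.
    apply: lb_le_inf; first by exists (sched_time m s0); exists s0.
    move=> z [s hs <-]; apply: h0 => //; exact: sched_bound.
  have [a1 a2 a3 a4 [a5 a6 a7]] := sched_pair p0.
  exists (PAof s0), (PBof s0); split => //; split => //.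
  by rewrite -a7; apply: le_trans hf.
move=> [PA [PB [pA pB sA sB [z1 z2 hc]]]].
have [s [hs hc']] := pair_sched pA pB sA sB z1 z2.
apply: le_trans hc; rewrite -hc'.
by apply: (ge_inf hlb); exists s.
Qed.

End Machine.


Theorem theorem3 (R : realType) (p : nat) (ms : nat -> machine R) (L : R) :
  (1 <= p)%N ->
  (forall v, (1 <= v <= p)%N ->
     [/\ 0 <= kA (ms v), 0 <= kB (ms v), 0 <= tA (ms v) & 0 <= tB (ms v)]) ->
  forall v a : nat, (1 <= v <= p)%N ->
  forall c1 c2 c3 : nat, (c1 < c2 < c3)%N ->
    dp ms L v a c1 -> dp ms L v a c3 -> dp ms L v a c2.
Proof.
move=> hp hnn v a hv c1 c2 c3 hc dp1 dp3.
pose Bp := fun i x y => Bpair (ms i) L x y.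
pose G := fun i x n => Gm (ms i) L x n.
have nn : forall i, (1 <= i <= v)%N ->
    [/\ 0 <= kA (ms i), 0 <= kB (ms i), 0 <= tA (ms i) & 0 <= tB (ms i)].
  by move=> i hi; apply: hnn; move: hi hv; clear; move=> *; lia.
have toB : forall c, dp ms L v a c -> Sum Bp v a c.
  move=> c hd; apply: (Sum_mono (P := fun i x y => bset (ms i) L x y)) hd.
  move=> i x y hi; case: (nn i hi) => h1 h2 h3 h4.
  by move/(@f_le_iff _ (ms i) L h1 h2 h3 h4).
have fromB : forall c, Sum Bp v a c -> dp ms L v a c.
  move=> c hd; apply: (Sum_mono (Q := fun i x y => bset (ms i) L x y)) hd.
  move=> i x y hi; case: (nn i hi) => h1 h2 h3 h4.
  by move=> h; apply/(@f_le_iff _ (ms i) L h1 h2 h3 h4).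
have [IG _] : IntP (Sum G v) /\ SP (Sum G v).
  apply: Sum_props => i hi; case: (nn i hi) => h1 h2 h3 h4.
  by split; [apply: Gm_IntP | apply: Gm_SP].
have [n ln gn] : exists2 n, (n <= c1)%N & Sum G v a n.
  apply: (Sum_down (B := Bp)); last exact: toB.
  by move=> i x y hi; case: (nn i hi) => h1 h2 h3 h4; apply: Fa.
have key : forall c, (c1 < c)%N -> Sum Bp v a c -> Sum Bp v a c.-1.
  move=> c hlt hs.
  have := Sum_step (B := Bp) (G := G) _ hs.
  case.
  - by move=> i x y hi; case: (nn i hi) => h1 h2 h3 h4; apply: Fc.
  - by case.
  move=> hg.
  have hg' : Sum G v a c.-1.
    by apply: (IG a n _ c) => //; rewrite /btw; move: ln hlt; clear; move=> *; lia.
  apply: (Sum_mono (P := G)) hg' => i x y hi; case: (nn i hi) => h1 h2 h3 h4.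
  exact: Fb.
apply: fromB.
have : forall k, Sum Bp v a (c2 + k) -> Sum Bp v a c2.
  elim => [|k IH]; first by rewrite addn0.
  move=> hs; apply: IH.
  have := key (c2 + k.+1)%N ltac:(move: hc; clear; move=> *; lia) hs.
  by rewrite addnS.
move=> /(_ (c3 - c2)%N); rewrite subnKC; last by move: hc; clear; move=> *; lia.
by move=> h; apply: h; apply: toB.
Qed.
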